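(* Fix the hypervector dimension $d>0$ and the corresponding round number $J_d\ge1$. For each user $i\in\{1,\dots,U\}$ define $$t_i^{\max}(d)=\frac{T-\frac{Z_id+(J_d-1)G_id}{f_i^{\max}}}{J_d},$$ and for $t>0$ let $b_i^{\min}(t)=\inf\{b>0:\ t\,b\log_2(1+\frac{p_i^{\max}g_i}{N_0b})\ge N_id\}\in(0,\infty]$. Then the set of $(\boldsymbol t,\boldsymbol b,\boldsymbol p,\boldsymbol f)$ satisfying, for all $i$, $$\frac{Z_id+(J_d-1)G_id}{f_i}+J_dt_i\le T,\quad t_ib_i\log_2\!\Big(1+\frac{p_ig_i}{N_0b_i}\Big)\ge N_id,\quad\sum_{j=1}^Ub_j\le B,\quad 0\le p_i\le p_i^{\max},\quad 0<f_i\le f_i^{\max},\quad b_i>0,\quad t_i\ge0$$ is nonempty if and only if (1) $t_i^{\max}(d)>0$ for all $i$, and (2) $\sum_{i=1}^U b_i^{\min}\big(t_i^{\max}(d)\big)\le B$.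
   Context: $U$ users; $t_i,b_i,p_i,f_i$ are user $i$'s per-round transmission time, bandwidth, transmit power and CPU frequency, with limits $p_i^{\max}>0$, $f_i^{\max}>0$; $g_i>0$ the channel power gain, $N_0>0$ the noise power spectral density, $N_i>0$ the number of classes (payload $N_id$ bits), $B>0$ the total bandwidth, $T>0$ the total time budget; $Z_i=D_iC_i^{(\mathrm{init})}>0$ and $G_i=D_iC_i^{(\mathrm{ret})}\ge0$ the per-dimension CPU cycles for the first round and for each retraining round. *)

(* Defs.v *)
From HB Require Import structures.
From mathcomp Require Import all_boot all_order all_algebra.
From mathcomp Require Import all_classical all_reals all_analysis.
Set Implicit Arguments. Unset Strict Implicit. Unset Printing Implicit Defensive.
Import Order.TTheory GRing.Theory Num.Theory.
Local Open Scope classical_set_scope.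
Local Open Scope ring_scope.

Section Defs.
Variable R : realType.

Definition log2 (x : R) : R := ln x / ln 2.

Definition bits (t b p g N0 : R) : R := t * b * log2 (1 + p * g / (N0 * b)).

Definition cycles (Z G : R) (d J : nat) : R := Z * d%:R + (J%:R - 1) * G * d%:R.

Definition tmax (T Z G fmax : R) (d J : nat) : R :=
  (T - cycles Z G d J / fmax) / J%:R.

Definition bmin (pmax g N0 : R) (Nd : R) (t : R) : \bar R :=
  ereal_inf [set b%:E | b in [set b : R | 0 < b /\ Nd <= bits t b pmax g N0]].

Definition feasible (U d J : nat) (T B N0 : R) (g pmax fmax Z G : 'I_U -> R)
    (N : 'I_U -> nat) (t b p f : 'I_U -> R) : Prop :=
  (forall i, cycles (Z i) (G i) d J / f i + J%:R * t i <= T) /\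
  (forall i, (N i * d)%:R <= bits (t i) (b i) (p i) (g i) N0) /\
  (\sum_(j < U) b j <= B) /\
  (forall i, 0 <= p i <= pmax i) /\
  (forall i, 0 < f i <= fmax i) /\
  (forall i, 0 < b i) /\
  (forall i, 0 <= t i).
End Defs.

(* Main.v *)
Require Import Defs.
From HB Require Import structures.
From mathcomp Require Import all_boot all_order all_algebra.
From mathcomp Require Import all_classical all_reals all_analysis.
From mathcomp Require Import ring lra.
Import Order.TTheory GRing.Theory Num.Theory.
Set Implicit Arguments. Unset Strict Implicit.
Local Open Scope classical_set_scope.
Local Open Scope ring_scope.


Lemma ln2_gt0 {R : realType} : 0 < ln (2:R).
Proof. by apply: ln_gt0; rewrite ltr1n. Qed.

Lemma ln1p_sqrt {R : realType} (y : R) : 0 <= y -> ln (1 + y) <= 2 * Num.sqrt y.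
Proof.
move=> y0; set s := Num.sqrt y.
have s0 : 0 <= s by apply: sqrtr_ge0.
have sy : s ^+ 2 = y by apply: sqr_sqrtr.
have h1 : 1 + y <= (1 + s) * (1 + s).
  rewrite -sy; rewrite expr2; nra.
have -> : 2 * s = s + s by rewrite mulr2n mulrDl mul1r.
apply: (le_trans (y := ln ((1 + s) * (1 + s)))).
  by rewrite ler_ln // posrE; nra.
rewrite lnM ?posrE; try nra.
by apply: lerD; apply: le_ln1Dx; lra.
Qed.

Lemma bits_le_sqrt {R : realType} (t b p g N0 : R) : 0 <= t -> 0 < b -> 0 <= p -> 0 <= g -> 0 < N0 ->
  bits t b p g N0 <= t * (2 * Num.sqrt (b * (p * g / N0))) / ln 2.
Proof.
move=> t0 b0 p0 g0 N00.
rewrite /bits /log2.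
set y := p * g / (N0 * b).
have y0 : 0 <= y by rewrite /y divr_ge0 // ?mulr_ge0 // ltW.
have -> : b * (p * g / N0) = (b * b) * y.
  rewrite /y; field; apply/andP; split; rewrite gt_eqF //.
rewrite sqrtrM; last by rewrite mulr_ge0 // ltW.
have -> : Num.sqrt (b * b) = b by rewrite -expr2 sqrtr_sqr gtr0_norm.
have -> : t * b * (ln (1 + y) / ln 2) = t * (b * ln (1 + y)) / ln 2 by ring.
rewrite ler_pM2r ?invr_gt0 ?ln2_gt0 // ler_wpM2l //.
have h := ln1p_sqrt y0.
have -> : 2 * (b * Num.sqrt y) = b * (2 * Num.sqrt y) by ring.
by rewrite ler_wpM2l // ltW.
Qed.

Lemma bits_lb {R : realType} (t b p g N0 Nd : R) : 0 < t -> 0 < b -> 0 < p -> 0 < g -> 0 < N0 ->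
  0 < Nd -> Nd <= bits t b p g N0 ->
  (Nd * ln 2 / (2 * t)) ^+ 2 / (p * g / N0) <= b.
Proof.
move=> t0 b0 p0 g0 N00 Nd0 h.
have := le_trans h (bits_le_sqrt (ltW t0) b0 (ltW p0) (ltW g0) N00).
set c := p * g / N0.
have c0 : 0 < c by rewrite /c divr_gt0 // mulr_gt0.
set s := Num.sqrt (b * c) => h2.
have l2 := @ln2_gt0 R.
have hx : Nd * ln 2 / (2 * t) <= s.
  rewrite ler_pdivrMr ?mulr_gt0 //.
  move: h2; rewrite ler_pdivlMr //.
  have -> : t * (2 * s) = s * (2 * t) by ring.
  by [].
have x0 : 0 <= Nd * ln 2 / (2 * t).
  by rewrite divr_ge0 // ?mulr_ge0 // ltW // mulr_gt0.
have hs : s ^+ 2 = b * c by rewrite sqr_sqrtr // mulr_ge0 // ltW.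
rewrite ler_pdivrMr // -hs.
by rewrite lerXn2r // ?nnegrE // sqrtr_ge0.
Qed.

Lemma bits_mono {R : realType} (t t' b p p' g N0 : R) : 0 <= t -> t <= t' -> 0 < b ->
  0 <= p -> p <= p' -> 0 <= g -> 0 < N0 ->
  bits t b p g N0 <= bits t' b p' g N0.
Proof.
move=> t0 tt b0 p0 pp g0 N00.
rewrite /bits /log2.
have y0 : 0 <= p * g / (N0 * b) by rewrite divr_ge0 // ?mulr_ge0 // ltW // mulr_gt0.
have yy : p * g / (N0 * b) <= p' * g / (N0 * b).
  by rewrite ler_pM2r ?invr_gt0 ?mulr_gt0 // ler_wpM2r.
have h1 : 1 <= 1 + p * g / (N0 * b) by lra.
have h2 : 1 <= 1 + p' * g / (N0 * b) by lra.
have L0 : 0 <= ln (1 + p * g / (N0 * b)) / ln 2.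
  by apply: divr_ge0; [exact: ln_ge0 | exact: ltW ln2_gt0].
have LL : ln (1 + p * g / (N0 * b)) / ln 2 <= ln (1 + p' * g / (N0 * b)) / ln 2.
  rewrite ler_pM2r ?invr_gt0 ?ln2_gt0 // ler_ln ?posrE; try lra.
apply: ler_pM => //; first by rewrite mulr_ge0 // ltW.
by rewrite ler_wpM2r // ltW.
Qed.

Lemma bmin_attained {R : realType} (t p g N0 Nd : R) : 0 < t -> 0 < p -> 0 < g -> 0 < N0 -> 0 < Nd ->
  bmin p g N0 Nd t \is a fin_num ->
  0 < fine (bmin p g N0 Nd t) /\ Nd <= bits t (fine (bmin p g N0 Nd t)) p g N0.
Proof.
move=> t0 p0 g0 N00 Nd0 hfin.
set m := fine (bmin p g N0 Nd t).
have hm : (bmin p g N0 Nd t = m%:E)%E by rewrite /m fineK.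
move: hfin; rewrite /bmin in hm * => hfin.
set S := [set b : R | 0 < b /\ Nd <= bits t b p g N0] in hm hfin *.
set L := (Nd * ln 2 / (2 * t)) ^+ 2 / (p * g / N0).
have l2 := @ln2_gt0 R.
have L0 : 0 < L.
  rewrite /L divr_gt0 ?exprn_gt0 ?divr_gt0 ?mulr_gt0 //.
have lb : forall b, S b -> L <= b.
  by move=> b [b0 hb]; apply: bits_lb.
have hLm : L <= m.
  rewrite -lee_fin -hm; apply/ereal_infP => y [b Sb <-]; rewrite lee_fin; exact: lb.
have m0 : 0 < m by apply: lt_le_trans hLm.
have lbm : forall b, S b -> m <= b.
  move=> b Sb; rewrite -lee_fin -hm; apply: ereal_inf_lbound; by exists b.
split => //.
case: (leP Nd (bits t m p g N0)) => // hlt.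
exfalso.
set Lm := ln (1 + p * g / (N0 * m)) / ln 2.
have hLm0 : 0 < Lm.
  rewrite /Lm divr_gt0 // ln_gt0 // ltrDl divr_gt0 ?mulr_gt0 //.
have hbm : bits t m p g N0 = t * m * Lm by [].
have tL0 : 0 < t * Lm by rewrite mulr_gt0.
have e0 : 0 < Nd / (t * Lm) - m.
  rewrite subr_gt0 ltr_pdivlMr //.
  by move: hlt; rewrite hbm; have -> : t * m * Lm = m * (t * Lm) by ring.
have [x [b Sb <-] hx] := lb_ereal_inf_adherent e0 hfin.
move: hx; rewrite hm -EFinD lte_fin => hx.
have hx' : b < Nd / (t * Lm) by move: hx; have -> : m + (Nd / (t * Lm) - m) = Nd / (t * Lm) by ring.
have bm := lbm b Sb.
have b0 : 0 < b by apply: lt_le_trans bm.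
have hb : bits t b p g N0 <= t * b * Lm.
  rewrite /bits /log2 /Lm; apply: ler_wpM2l; first by rewrite mulr_ge0 // ltW.
  rewrite ler_pM2r ?invr_gt0 // ler_ln ?posrE.
  - rewrite lerD2l ler_pM2l ?mulr_gt0 // lef_pV2 ?posrE ?mulr_gt0 //.
    by rewrite ler_pM2l.
  - by rewrite ltr_wpDr // ltW // divr_gt0 ?mulr_gt0.
  - by rewrite ltr_wpDr // ltW // divr_gt0 ?mulr_gt0.
have : t * b * Lm < Nd.
  by move: hx'; rewrite ltr_pdivlMr //; have -> : b * (t * Lm) = t * b * Lm by ring.
move=> h; have := le_lt_trans (le_trans Sb.2 hb) h.
by rewrite ltxx.
Qed.


Theorem proposition2 (R : realType) (U d J : nat) (T B N0 : R)
    (g pmax fmax Z G : 'I_U -> R) (N : 'I_U -> nat)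
    (hd : (0 < d)%N) (hJ : (1 <= J)%N) (hT : 0 < T) (hB : 0 < B) (hN0 : 0 < N0)
    (hg : forall i, 0 < g i) (hpmax : forall i, 0 < pmax i)
    (hfmax : forall i, 0 < fmax i) (hZ : forall i, 0 < Z i)
    (hG : forall i, 0 <= G i) (hN : forall i, (0 < N i)%N) :
  (exists t b p f : 'I_U -> R, feasible d J T B N0 g pmax fmax Z G N t b p f) <->
  ((forall i, 0 < tmax T (Z i) (G i) (fmax i) d J) /\
   (\sum_(i < U) bmin (pmax i) (g i) N0 (N i * d)%:R (tmax T (Z i) (G i) (fmax i) d J)
      <= B%:E)%E).
Proof.
have hJ0 : 0 < (J%:R : R) by rewrite ltr0n.
have hJ1 : 0 <= (J%:R : R) - 1 by rewrite subr_ge0 ler1n.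
have hd0 : 0 < (d%:R : R) by rewrite ltr0n.
have cyc : forall i, 0 < cycles (Z i) (G i) d J.
  move=> i; rewrite /cycles; apply: ltr_wpDr; last by rewrite mulr_gt0.
  by rewrite !mulr_ge0 // ltW.
have hNd : forall i, 0 < ((N i * d)%N%:R : R) by move=> i; rewrite ltr0n muln_gt0 hN.
split.
- move=> [t [b [p [f [h1 [h2 [h3 [h4 [h5 [h6 h7]]]]]]]]]].
  have tle : forall i, t i <= tmax T (Z i) (G i) (fmax i) d J.
    move=> i; rewrite /tmax ler_pdivlMr //.
    have [f0 ff] := andP (h5 i).
    have : cycles (Z i) (G i) d J / fmax i <= cycles (Z i) (G i) d J / f i.
      by rewrite ler_pM2l // lef_pV2 ?posrE // (lt_le_trans f0).
    have := h1 i; lra.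
  have tpos : forall i, 0 < t i.
    move=> i; rewrite lt_def h7 andbT; apply/negP => /eqP t0.
    have := h2 i; rewrite /bits t0 !mul0r => h.
    by have := lt_le_trans (hNd i) h; rewrite ltxx.
  split.
    by move=> i; apply: lt_le_trans (tpos i) (tle i).
  apply: (le_trans (y := (\sum_(i < U) (b i)%:E)%E)); last by rewrite sumEFin lee_fin.
  apply: lee_sum => i _; apply: ereal_inf_lbound; exists (b i) => //; split => //.
  apply: le_trans (h2 i) _.
  have [p0 pp] := andP (h4 i).
  apply: bits_mono => //; by [apply: h7 | apply: tle | apply: h6 | apply: ltW].
- move=> [htm hs].
  set bm := fun i => bmin (pmax i) (g i) N0 (N i * d)%:R (tmax T (Z i) (G i) (fmax i) d J).
  have bm0 : forall i, (0 <= bm i)%E.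
    move=> i; apply/ereal_infP => y [x [x0 _] <-]; rewrite lee_fin; exact: ltW.
  have bmfin : forall i, bm i \is a fin_num.
    move=> i; rewrite ge0_fin_numE //; apply: (le_lt_trans (y := B%:E)); last exact: ltry.
    apply: le_trans hs; rewrite (bigD1 i) //=.
    by apply: leeDl; apply: sume_ge0 => j _; exact: bm0.
  have key : forall i, 0 < fine (bm i) /\ ((N i * d)%N%:R <= bits (tmax T (Z i) (G i) (fmax i) d J) (fine (bm i)) (pmax i) (g i) N0).
    by move=> i; apply: bmin_attained => //; exact: bmfin.
  exists (fun i => tmax T (Z i) (G i) (fmax i) d J), (fun i => fine (bm i)), pmax, fmax.
  split; [|split; [|split; [|split; [|split; [|split]]]]].
  + move=> i; rewrite /tmax mulrCA mulfV ?gt_eqF // mulr1 addrC subrK.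
    exact: lexx.
  + by move=> i; case: (key i).
  + rewrite -lee_fin -sumEFin; apply: le_trans hs; apply: lee_sum => i _.
    by rewrite fineK.
  + by move=> i; rewrite lexx ltW.
  + by move=> i; rewrite lexx hfmax.
  + by move=> i; case: (key i).
  + by move=> i; exact: ltW.
Qed.
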